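(* Let $\lambda\in[0,1]$ and $\kappa=(1-\lambda)/(1-\gamma\lambda)$. Under the standing assumptions below, the map $\theta\mapsto-\bar x(\theta)$ (the negative of the steady-state expected TD($\lambda$) update) is a gradient splitting of the quadratic $$f^{(\lambda)}(\theta)=(1-\gamma\kappa)\|V_\theta-V_{\theta^*_\lambda}\|_D^2+(1-\lambda)\sum_{m=0}^\infty\lambda^m\gamma^{m+1}\|V_\theta-V_{\theta^*_\lambda}\|_{{\rm Dir},m+1}^2 .$$ Explicitly, $-\bar x(\theta)=B_\lambda(\theta-\theta^*_\lambda)$ and $f^{(\lambda)}(\theta)=(\theta-\theta^*_\lambda)^TB_\lambda(\theta-\theta^*_\lambda)$ with $B_\lambda=\Phi^TD\Phi-(1-\lambda)\sum_{m\ge0}\lambda^m\gamma^{m+1}\Phi^TDP^{m+1}\Phi$.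
   Context: Setting: finite state space $\mathcal S=[n]$, a fixed policy inducing a transition matrix $P$ which is irreducible and aperiodic with unique stationary distribution $\pi$ (row vector), $D=\mathrm{diag}(\pi)$; bounded deterministic rewards, $r(s,s')=\sum_a\mu(s,a)r(s,a,s')$, $R(s)=\sum_{s'}P(s,s')r(s,s')$ (vector $R\in\mathbb{R}^n$); discount $\gamma\in(0,1)$. Features $\Phi\in\mathbb{R}^{n\times K}$ of full column rank with rows $\phi(s)^T$, $\|\phi(s)\|_2\le1$, $V_\theta=\Phi\theta$. Norms: $\|V\|_D^2=\sum_s\pi_sV(s)^2$; $k$-step Dirichlet seminorm $\|V\|_{{\rm Dir},k}^2=\frac12\sum_{s,s'}\pi_s(P^k)(s,s')(V(s')-V(s))^2$. The operator $T^{(\lambda)}:\mathbb{R}^n\to\mathbb{R}^n$ is $T^{(\lambda)}J=(1-\lambda)\sum_{m\ge0}\lambda^m\sum_{t=0}^m\gamma^tP^tR+(1-\lambda)\sum_{m\ge0}\lambda^m\gamma^{m+1}P^{m+1}J$. The mean TD($\lambda$) direction is $\bar x(\theta)=\Phi^TD\big(T^{(\lambda)}(\Phi\theta)-\Phi\theta\big)$ (the steady-state mean of $\delta_tz_t$ with eligibility trace $z_t=\sum_{k=-\infty}^{t}(\gamma\lambda)^k\phi(s_{t-k})$), and $\theta^*_\lambda$ is the unique vector with $\bar x(\theta^*_\lambda)=0$. Gradient splitting: for symmetric PSD $A$ and $f(\theta)=(\theta-a)^TA(\theta-a)$, a linear map $h(\theta)=B(\theta-a)$ is a gradient splitting of $f$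 if $B+B^T=2A$. *)

(* Defs.v *)
From HB Require Import structures.
From mathcomp Require Import all_boot all_order all_algebra.
From mathcomp Require Import all_classical all_reals all_analysis.
Set Implicit Arguments. Unset Strict Implicit. Unset Printing Implicit Defensive.
Import Order.TTheory GRing.Theory Num.Theory numFieldNormedType.Exports.
Local Open Scope ring_scope.

Section TD.
Variable R : realType.

Definition rseries (u : nat -> R) : R := limn (series u).

Definition mseries m n (F : nat -> 'M[R]_(m, n)) : 'M[R]_(m, n) :=
  \matrix_(i, j) rseries (fun k => F k i j).

Definition stochastic n (P : 'M[R]_n) :=
  (forall i j, 0 <= P i j) /\ (forall i, \sum_j P i j = 1).
Definition irreducible n (P : 'M[R]_n) :=
  forall i j, exists k : nat, 0 < (P ^+ k) i j.
(* period of every state is 1: the gcd of the return times is 1 *)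
Definition aperiodic n (P : 'M[R]_n) :=
  forall i : 'I_n, forall d : nat,
    (forall k : nat, (0 < k)%N -> 0 < (P ^+ k) i i -> (d %| k)%N) -> d = 1%N.
Definition stationary_distribution n (P : 'M[R]_n) (pi : 'rV[R]_n) :=
  (forall s, 0 <= pi 0 s) /\ \sum_s pi 0 s = 1 /\ pi *m P = pi.

Definition normD2 n (pi : 'rV[R]_n) (V : 'cV[R]_n) : R :=
  \sum_s pi 0 s * V s 0 ^+ 2.
Definition dir2 n (P : 'M[R]_n) (pi : 'rV[R]_n) (k : nat) (V : 'cV[R]_n) : R :=
  2^-1 * \sum_s \sum_s' pi 0 s * (P ^+ k) s s' * (V s' 0 - V s 0) ^+ 2.

Definition Rvec n (P r : 'M[R]_n) : 'cV[R]_n := \col_s \sum_s' P s s' * r s s'.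

(* The TD(lambda) operator.  For lambda = 1 the formula of the paper is read as
   its limit (standard TD(1) operator): T^(1) J = sum_t gamma^t P^t R. *)
Definition Tlam n (P : 'M[R]_n) (Rv : 'cV[R]_n) (gamma lambda : R) (J : 'cV[R]_n)
  : 'cV[R]_n :=
  (if lambda < 1 then
     (1 - lambda) *: mseries (fun m => lambda ^+ m *:
        \sum_(t < m.+1) (gamma ^+ t *: (P ^+ t *m Rv)))
   else mseries (fun t => gamma ^+ t *: (P ^+ t *m Rv)))
  + (1 - lambda) *: mseries (fun m => (lambda ^+ m * gamma ^+ m.+1) *: (P ^+ m.+1 *m J)).

Definition xbar n K (P : 'M[R]_n) (pi : 'rV[R]_n) (Rv : 'cV[R]_n) (Phi : 'M[R]_(n, K))
  (gamma lambda : R) (theta : 'cV[R]_K) : 'cV[R]_K :=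
  Phi^T *m diag_mx pi *m (Tlam P Rv gamma lambda (Phi *m theta) - Phi *m theta).

Definition flam n K (P : 'M[R]_n) (pi : 'rV[R]_n) (Phi : 'M[R]_(n, K))
  (gamma lambda : R) (thetas theta : 'cV[R]_K) : R :=
  let kappa := (1 - lambda) / (1 - gamma * lambda) in
  let W := Phi *m theta - Phi *m thetas in
  (1 - gamma * kappa) * normD2 pi W
  + (1 - lambda) * rseries (fun m => lambda ^+ m * gamma ^+ m.+1 * dir2 P pi m.+1 W).

Definition Blam n K (P : 'M[R]_n) (pi : 'rV[R]_n) (Phi : 'M[R]_(n, K))
  (gamma lambda : R) : 'M[R]_K :=
  Phi^T *m diag_mx pi *m Phi
  - (1 - lambda) *: mseries (fun m => (lambda ^+ m * gamma ^+ m.+1) *: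
       (Phi^T *m diag_mx pi *m P ^+ m.+1 *m Phi)).

Definition qform K (A : 'M[R]_K) (x : 'cV[R]_K) : R := (x^T *m A *m x) 0 0.

Definition psd K (A : 'M[R]_K) := A^T = A /\ forall x, 0 <= qform A x.
Definition gradient_splitting K (h : 'cV[R]_K -> 'cV[R]_K) (f : 'cV[R]_K -> R) :=
  exists (A : 'M[R]_K) (a : 'cV[R]_K) (B : 'M[R]_K),
    psd A /\ (forall theta, f theta = qform A (theta - a)) /\
    (forall theta, h theta = B *m (theta - a)) /\ B + B^T = 2%:R *: A.

End TD.

(* Main.v *)
Require Import Defs.
From HB Require Import structures.
From mathcomp Require Import all_boot all_order all_algebra.
From mathcomp Require Import all_classical all_reals all_analysis.
From mathcomp Require Import ring lra.
Import Order.TTheory GRing.Theory Num.Theory numFieldNormedType.Exports.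
Set Implicit Arguments. Unset Strict Implicit.
Local Open Scope ring_scope.


Lemma rs_add (R : realType) (u v : nat -> R) :
  cvgn (series u) -> cvgn (series v) ->
  cvgn (series (fun k => u k + v k)) /\
  rseries (fun k => u k + v k) = rseries u + rseries v.
Proof.
move=> cu cv; have -> : (fun k => u k + v k) = u + v by [].
split; first exact: is_cvg_seriesD.
by rewrite /rseries lim_seriesD.
Qed.

Lemma rs_scale (R : realType) (a : R) (u : nat -> R) :
  cvgn (series u) ->
  cvgn (series (fun k => a * u k)) /\
  rseries (fun k => a * u k) = a * rseries u.
Proof.
move=> cu; have -> : (fun k => a * u k) = a *: u by [].
split; first exact: is_cvg_seriesZ.
by rewrite /rseries lim_seriesZ.
Qed.

Lemma rs_sum (R : realType) (I : Type) (s : seq I) (u : I -> nat -> R) :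
  (forall i, cvgn (series (u i))) ->
  cvgn (series (fun k => \sum_(i <- s) u i k)) /\
  rseries (fun k => \sum_(i <- s) u i k) = \sum_(i <- s) rseries (u i).
Proof.
move=> cu; elim: s => [|a s [IH1 IH2]].
  under eq_fun do rewrite big_nil.
  rewrite big_nil.
  have E : series (fun _ : nat => 0 : R) = fun _ => 0.
    by apply/funext => k; rewrite /series /= big1.
  rewrite /rseries E; split; first exact: is_cvg_cst.
  exact: lim_cst.
under eq_fun do rewrite big_cons.
rewrite big_cons; have [h1 h2] := rs_add (cu a) IH1.
by split => //; rewrite h2 IH2.
Qed.

Lemma rs_ge0 (R : realType) (u : nat -> R) :
  cvgn (series u) -> (forall k, 0 <= u k) -> 0 <= rseries u.
Proof.
move=> cu u0; apply: limr_ge => //; near=> k.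
by rewrite /series /= sumr_ge0.
Unshelve. all: by end_near.
Qed.

Lemma rs_dom (R : realType) (C q : R) (u : nat -> R) :
  0 <= q < 1 -> (forall k, `|u k| <= C * q ^+ k) -> cvgn (series u).
Proof.
move=> /andP[q0 q1] hu.
have C0 : 0 <= C by have := hu 0%N; rewrite expr0 mulr1; apply: le_trans.
apply: (@normed_cvg _ R^o); rewrite /normed_series_of /=.
apply: (@series_le_cvg _ _ (geometric C q)).
- by move=> k.
- by move=> k; rewrite /geometric /= mulr_ge0 // exprn_ge0.
- by move=> k; rewrite /geometric /=.
- by apply: is_cvg_geometric_series; rewrite ger0_norm.
Qed.

Lemma rs_geom (R : realType) (a z : R) : `|z| < 1 ->
  rseries (fun k => a * z ^+ k) = a / (1 - z).
Proof.
move=> hz; rewrite /rseries.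
have -> : (fun k => a * z ^+ k) = geometric a z by [].
by apply: cvg_lim => //; apply: cvg_geometric_series.
Qed.

Lemma rs_sub (R : realType) (u v : nat -> R) :
  cvgn (series u) -> cvgn (series v) ->
  cvgn (series (fun k => u k - v k)) /\
  rseries (fun k => u k - v k) = rseries u - rseries v.
Proof.
move=> cu cv; have -> : (fun k => u k - v k) = u - v by [].
split; first exact: is_cvg_seriesB.
by rewrite /rseries lim_seriesB.
Qed.



Definition mcvg (R : realType) m n (F : nat -> 'M[R]_(m, n)) :=
  forall i j, cvgn (series (fun k => F k i j)).

Lemma ms_mull (R : realType) m n p (L : 'M[R]_(p, m)) (F : nat -> 'M[R]_(m, n)) :
  mcvg F -> mcvg (fun k => L *m F k) /\
  Defs.mseries (fun k => L *m F k) = L *m Defs.mseries F.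
Proof.
move=> cF.
have H : forall i j, cvgn (series (fun k => (L *m F k) i j)) /\
   rseries (fun k => (L *m F k) i j) = (L *m Defs.mseries F) i j.
  move=> i j; under eq_fun do rewrite mxE.
  have [h1 h2] := @rs_sum _ _ (index_enum 'I_m) (fun a (k : nat) => L i a * F k a j)
     (fun a => (rs_scale (L i a) (cF a j)).1).
  split => //; rewrite h2 mxE; apply: eq_bigr => a _.
  by rewrite (rs_scale (L i a) (cF a j)).2 mxE.
split; first by move=> i j; exact: (H i j).1.
by apply/matrixP => i j; rewrite mxE (H i j).2.
Qed.

Lemma ms_mulr (R : realType) m n p (M : 'M[R]_(n, p)) (F : nat -> 'M[R]_(m, n)) :
  mcvg F -> mcvg (fun k => F k *m M) /\
  Defs.mseries (fun k => F k *m M) = Defs.mseries F *m M.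
Proof.
move=> cF.
have H : forall i j, cvgn (series (fun k => (F k *m M) i j)) /\
   rseries (fun k => (F k *m M) i j) = (Defs.mseries F *m M) i j.
  move=> i j; under eq_fun do rewrite mxE.
  under eq_fun do under eq_bigr do rewrite mulrC.
  have [h1 h2] := @rs_sum _ _ (index_enum 'I_n) (fun a (k : nat) => M a j * F k i a)
     (fun a => (rs_scale (M a j) (cF i a)).1).
  split => //; rewrite h2 mxE; apply: eq_bigr => a _.
  by rewrite (rs_scale (M a j) (cF i a)).2 mxE mulrC.
split; first by move=> i j; exact: (H i j).1.
by apply/matrixP => i j; rewrite mxE (H i j).2.
Qed.



Lemma stoch_pow (R : realType) n (P : 'M[R]_n) : stochastic P -> forall k,
  (forall i j, 0 <= (P ^+ k) i j) /\ (forall i, \sum_j (P ^+ k) i j = 1).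
Proof.
move=> [P0 P1]; elim=> [|k [IH0 IH1]].
  split=> [i j|i]; first by rewrite expr0 mxE ler0n.
  rewrite expr0 (bigD1 i) //= big1 ?addr0 ?mxE ?eqxx //.
  by move=> j /negPf ji; rewrite mxE eq_sym ji.
split=> [i j|i]; rewrite exprS.
  by rewrite mxE sumr_ge0 // => a _; rewrite mulr_ge0.
under eq_bigr do rewrite mxE.
rewrite exchange_big /=.
under eq_bigr do rewrite -mulr_sumr IH1 mulr1.
exact: P1.
Qed.

Lemma stoch_pow_le1 (R : realType) n (P : 'M[R]_n) : stochastic P -> forall k i j,
  0 <= (P ^+ k) i j <= 1.
Proof.
move=> hP k i j; have [h0 h1] := stoch_pow hP k.
rewrite h0 /= -(h1 i) (bigD1 j) //= lerDl sumr_ge0 //.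
Qed.

Lemma stat_pow (R : realType) n (P : 'M[R]_n) pi :
  stationary_distribution P pi -> forall k, pi *m P ^+ k = pi.
Proof.
move=> [_ [_ h]]; elim=> [|k IH]; first by rewrite expr0 mulmx1.
by rewrite exprSr mulmxA IH.
Qed.

Lemma G_cvg (R : realType) n (P : 'M[R]_n) (gamma lambda : R) :
  stochastic P -> 0 < gamma < 1 -> 0 <= lambda <= 1 ->
  mcvg (fun m => (lambda ^+ m * gamma ^+ m.+1) *: P ^+ m.+1).
Proof.
move=> hP /andP[g0 g1] /andP[l0 l1] i j.
apply: (@rs_dom _ 1 (lambda * gamma)).
  by apply/andP; split; nra.
move=> k; rewrite mxE mul1r normrM.
have /andP[a0 a1] := stoch_pow_le1 hP k.+1 i j.
have e0 : 0 <= lambda ^+ k * gamma ^+ k.+1 by rewrite mulr_ge0 // exprn_ge0 // ltW.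
rewrite (ger0_norm a0) (ger0_norm e0).
apply: (@le_trans _ _ (lambda ^+ k * gamma ^+ k.+1)).
  by rewrite -[X in _ <= X]mulr1 ler_wpM2l.
rewrite exprMn exprS.
have ha : 0 <= lambda ^+ k by rewrite exprn_ge0.
have hb : 0 <= gamma ^+ k by rewrite exprn_ge0 // ltW.
move: ha hb; set a := lambda ^+ k; set b := gamma ^+ k => ha hb; have hab : 0 <= a * b by rewrite mulr_ge0.
nra.
Qed.



Lemma quad2E (R : realType) n (pi : 'rV[R]_n) (W : 'cV[R]_n) :
  (W^T *m diag_mx pi *m W) 0 0 = \sum_a pi 0 a * W a 0 ^+ 2.
Proof.
rewrite mul_mx_diag mxE; apply: eq_bigr => a _; rewrite !mxE; ring.
Qed.

Lemma quadE (R : realType) n (pi : 'rV[R]_n) (M : 'M[R]_n) (W : 'cV[R]_n) :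
  (W^T *m diag_mx pi *m M *m W) 0 0 =
  \sum_a \sum_b pi 0 a * M a b * W a 0 * W b 0.
Proof.
rewrite mul_mx_diag mxE exchange_big /=; apply: eq_bigr => b _.
rewrite mxE mulr_suml; apply: eq_bigr => a _; rewrite !mxE; ring.
Qed.

Lemma dir2E (R : realType) n (P : 'M[R]_n) pi k (W : 'cV[R]_n) :
  stochastic P -> stationary_distribution P pi ->
  dir2 P pi k W = normD2 pi W - (W^T *m diag_mx pi *m P ^+ k *m W) 0 0.
Proof.
move=> hP hpi; rewrite quadE /dir2 /normD2.
have [_ h1] := stoch_pow hP k.
have h2 := stat_pow hpi k.
set N := \sum_(s < n) pi 0 s * W s 0 ^+ 2.
have A1 : \sum_s \sum_s' pi 0 s * (P ^+ k) s s' * W s' 0 ^+ 2 = N.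
  rewrite exchange_big /=; apply: eq_bigr => b _.
  rewrite -mulr_suml. congr (_ * _).
  by rewrite -[in RHS]h2 mxE.
have A2 : \sum_s \sum_s' pi 0 s * (P ^+ k) s s' * W s 0 ^+ 2 = N.
  apply: eq_bigr => a _.
  under eq_bigr do rewrite mulrAC.
  by rewrite -mulr_sumr h1 mulr1.
have E : \sum_s \sum_s' pi 0 s * (P ^+ k) s s' * (W s' 0 - W s 0) ^+ 2 =
   (\sum_s \sum_s' pi 0 s * (P ^+ k) s s' * W s' 0 ^+ 2)
 + (\sum_s \sum_s' pi 0 s * (P ^+ k) s s' * W s 0 ^+ 2)
 - 2 * \sum_s \sum_s' pi 0 s * (P ^+ k) s s' * W s 0 * W s' 0.
  rewrite mulr_sumr -big_split -sumrB /=; apply: eq_bigr => a _.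
  rewrite mulr_sumr -big_split -sumrB /=; apply: eq_bigr => b _.
  ring.
by rewrite E A1 A2; field.
Qed.



Lemma qform_sym (R : realType) K (B : 'M[R]_K) x :
  qform (2^-1 *: (B + B^T)) x = qform B x.
Proof.
rewrite /qform.
have T : (x^T *m B^T *m x) 0 0 = (x^T *m B *m x) 0 0.
  rewrite (_ : x^T *m B^T *m x = (x^T *m B *m x)^T); first by rewrite mxE.
  by rewrite !trmx_mul trmxK mulmxA.
rewrite -scalemxAr -scalemxAl mulmxDr mulmxDl.
rewrite mxE mxE T.
by field.
Qed.



Unset Implicit Arguments.

Theorem theorem2 (R : realType) (n K : nat) (P : 'M[R]_n) (pi : 'rV[R]_n)
  (r : 'M[R]_n) (Phi : 'M[R]_(n, K)) (gamma lambda : R) (thetas : 'cV[R]_K) :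
  stochastic P -> irreducible P -> aperiodic P ->
  stationary_distribution P pi ->
  \rank Phi = K ->
  (forall s : 'I_n, \sum_(j < K) Phi s j ^+ 2 <= 1) ->
  0 < gamma < 1 ->
  0 <= lambda <= 1 ->
  xbar P pi (Rvec P r) Phi gamma lambda thetas = 0 ->
  [/\ (forall theta, - xbar P pi (Rvec P r) Phi gamma lambda theta
                     = Blam P pi Phi gamma lambda *m (theta - thetas)),
      (forall theta, flam P pi Phi gamma lambda thetas theta
                     = qform (Blam P pi Phi gamma lambda) (theta - thetas)) &
      gradient_splitting (fun theta => - xbar P pi (Rvec P r) Phi gamma lambda theta)
                         (flam P pi Phi gamma lambda thetas)].
Proof.
move=> hP _ _ hpi _ _ hg hl hx.
pose G := fun m : nat => (lambda ^+ m * gamma ^+ m.+1) *: P ^+ m.+1.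
have cG : mcvg G := G_cvg hP hg hl.
pose Q := Defs.mseries G.
pose L := Phi^T *m diag_mx pi.
have HS : forall J : 'cV_n,
    Defs.mseries (fun m => (lambda ^+ m * gamma ^+ m.+1) *: (P ^+ m.+1 *m J)) = Q *m J.
  move=> J; rewrite -(ms_mulr J cG).2; congr Defs.mseries.
  by apply/funext => m; rewrite /G scalemxAl.
have HB : Blam P pi Phi gamma lambda = L *m Phi - (1 - lambda) *: (L *m Q *m Phi).
  rewrite /Blam; congr (_ - _ *: _).
  transitivity (Defs.mseries (fun k => L *m G k *m Phi)).
    by congr Defs.mseries; apply/funext => m; rewrite /G -scalemxAr -scalemxAl.
  by rewrite (ms_mulr Phi (ms_mull L cG).1).2 (ms_mull L cG).2.
have HX : forall theta, xbar P pi (Rvec P r) Phi gamma lambda theta =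
    L *m Tlam P (Rvec P r) gamma lambda 0 - Blam P pi Phi gamma lambda *m theta.
  move=> theta; rewrite HB /xbar /Tlam !HS mulmx0 scaler0 addr0.
  set C0 := (if _ then _ else _); rewrite -/L.
  rewrite mulmxBr mulmxDr mulmxBl opprB -!scalemxAl -!scalemxAr !mulmxA.
  by rewrite addrA.
have P1 : forall theta, - xbar P pi (Rvec P r) Phi gamma lambda theta
                     = Blam P pi Phi gamma lambda *m (theta - thetas).
  move=> theta; have := HX thetas; rewrite hx => /eqP; rewrite eq_sym subr_eq0 => /eqP E.
  by rewrite HX E opprB mulmxBr.
have [g0 g1] := andP hg; have [l0 l1] := andP hl.
have lg0 : 0 <= lambda * gamma by rewrite mulr_ge0 // ltW.
have lg1 : lambda * gamma < 1 by nra.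
have cc : cvgn (series (fun m => lambda ^+ m * gamma ^+ m.+1)).
  apply: (@rs_dom _ gamma (lambda * gamma)); first by rewrite lg0 lg1.
  move=> k; have e0 : 0 <= lambda ^+ k * gamma ^+ k.+1 by rewrite mulr_ge0 // exprn_ge0 // ltW.
  rewrite (ger0_norm e0) exprMn exprS le_eqVlt; apply/orP; left; apply/eqP; ring.
have sc : rseries (fun m => lambda ^+ m * gamma ^+ m.+1) = gamma / (1 - lambda * gamma).
  rewrite -rs_geom ?ger0_norm //; congr rseries; apply/funext => m.
  by rewrite exprMn exprS; ring.
have key : forall W : 'cV_n,
  cvgn (series (fun m => lambda ^+ m * gamma ^+ m.+1 * dir2 P pi m.+1 W)) /\
  rseries (fun m => lambda ^+ m * gamma ^+ m.+1 * dir2 P pi m.+1 W) =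
   normD2 pi W * (gamma / (1 - lambda * gamma)) - (W^T *m diag_mx pi *m Q *m W) 0 0.
  move=> W.
  have cF := (ms_mulr W (ms_mull (W^T *m diag_mx pi) cG).1).1.
  have EF := (ms_mulr W (ms_mull (W^T *m diag_mx pi) cG).1).2.
  rewrite (ms_mull (W^T *m diag_mx pi) cG).2 in EF.
  have -> : (fun m => lambda ^+ m * gamma ^+ m.+1 * dir2 P pi m.+1 W) =
     (fun m => normD2 pi W * (lambda ^+ m * gamma ^+ m.+1) -
               (W^T *m diag_mx pi *m G m *m W) 0 0).
    apply/funext => m; rewrite dir2E // /G -scalemxAr -scalemxAl  [X in _ = _ - X]mxE; ring.
  have [h1 h2] := rs_sub (rs_scale (normD2 pi W) cc).1 (cF 0 0).
  split => //; rewrite h2 (rs_scale (normD2 pi W) cc).2 sc -EF [in RHS]mxE.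
  by [].
have mxBZ : forall (A B : 'M[R]_1) (c : R), (A - c *: B) 0 0 = A 0 0 - c * B 0 0.
  by move=> A B c; rewrite !mxE.
have d0 : 1 - lambda * gamma != 0 by rewrite subr_eq0 eq_sym lt_eqF.
have d0' : 1 - gamma * lambda != 0 by rewrite mulrC.
have P2 : forall theta, flam P pi Phi gamma lambda thetas theta =
                        qform (Blam P pi Phi gamma lambda) (theta - thetas).
  move=> theta; rewrite /flam /qform -mulmxBr.
  move: (theta - thetas) => x; set W := Phi *m x.
  rewrite (key W).2 HB.
  have -> : x^T *m (L *m Phi - (1 - lambda) *: (L *m Q *m Phi)) *m x =
     W^T *m diag_mx pi *m W - (1 - lambda) *: (W^T *m diag_mx pi *m Q *m W).
    by rewrite /W /L trmx_mul mulmxBr mulmxBl -scalemxAr -scalemxAl !mulmxA.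
  rewrite mxBZ quad2E /normD2.
  by field; rewrite ?d0 ?d0'.
have dir0 : forall k (W : 'cV_n), 0 <= dir2 P pi k W.
  move=> k W; rewrite /dir2 mulr_ge0 ?invr_ge0 ?ler0n //.
  apply: sumr_ge0 => a _; apply: sumr_ge0 => b _.
  by rewrite mulr_ge0 ?sqr_ge0 // mulr_ge0 // ?(hpi.1 a) // (stoch_pow hP k).1.
have F0 : forall theta, 0 <= flam P pi Phi gamma lambda thetas theta.
  move=> theta; rewrite /flam.
  apply: addr_ge0; apply: mulr_ge0.
  - rewrite (_ : 1 - gamma * ((1 - lambda) / (1 - gamma * lambda)) =
                 (1 - gamma) / (1 - gamma * lambda)).
      by apply: divr_ge0; lra.
    by field.
  - by apply: sumr_ge0 => s _; rewrite mulr_ge0 ?sqr_ge0 // (hpi.1 s).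
  - by lra.
  - apply: rs_ge0; first exact: (key _).1.
    by move=> k; rewrite mulr_ge0 ?dir0 // mulr_ge0 ?exprn_ge0 // ltW.
split => //.
exists (2^-1 *: (Blam P pi Phi gamma lambda + (Blam P pi Phi gamma lambda)^T)), thetas,
  (Blam P pi Phi gamma lambda).
split; first split.
- by apply/matrixP => i j; rewrite !mxE addrC.
- by move=> x; rewrite qform_sym -[x](addrK thetas) -P2.
split; first by move=> theta; rewrite qform_sym P2.
split; first by move=> theta; rewrite P1.
by rewrite scalerA mulrC mulVf ?scale1r // pnatr_eq0.
Qed.
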